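(* Let $\mathcal{C}$ be an abelian $k$-linear category, $\mathcal{E}=(E_i)_{i\in\mathbb{Z}}$ a projective sequence in $\mathcal{C}$ with $\dim_k\operatorname{Hom}(E_i,X)<\infty$ for all $X\in\mathcal{C}$, and $A=A(\mathcal{E})$. Then: (i) $\mathcal{E}$ is coherent if and only if for every object $X\in\mathcal{C}$ the $A$-modules $\Gamma_{\le m}X$ are finitely generated for all $m\in\mathbb{Z}$; (ii) $\mathcal{E}$ is ample if and only if for every $X\in\mathcal{C}$ and every $m\in\mathbb{Z}$ there exists a surjection $\bigoplus_{j=1}^sE_{i_j}\to X$ for some integers $i_1,\dots,i_s$ with $i_j\le m$ for all $j$.
   Context: $k$ is a fixed field. A $\mathbb{Z}$-algebra is an associative $k$-algebra $A=\bigoplus_{i\le j}A_{ij}$ with $A_{ii}=k$, only nonzero products $A_{jk}\otimes A_{ij}\to A_{ik}$, units acting as identity, $\dim A_{ij}<\infty$. An $A$-module is a graded right module $M=\bigoplus_iM_i$ with action $M_j\otimes A_{ij}\to M_i$. $P_j=\bigoplus_iA_{ij}$; $M$ is finitely generated if it is a quotient of a finite direct sum of $P_j$'s. For the sequence $\mathcal{E}$, $A(\mathcal{E})$ has $A_{ij}=\operatorname{Hom}_{\mathcal{C}}(E_i,E_j)$ for $i<j$, $A_{ii}=k$, multiplication by composition. $\Gamma_{\le m}X=\bigoplus_{i\le m}\operatorname{Hom}(E_i,X)$ as an $A$-module. $\mathcal{E}$ is projective if for every surjection $X\to Y$ there is $n$ with $\operatorname{Hom}(E_i,X)\to\operatorname{Hom}(E_i,Y)$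 surjective for $i<n$. $\mathcal{C}_0$ is the full subcategory of $X$ with $\operatorname{Hom}(E_i,X)=0$ for $i\ll0$. A projective sequence is coherent if for every $X$ and $m$ there are $i_1,\dots,i_s\le m$ with $\bigoplus_j\operatorname{Hom}(E_{i_j},X)\otimes\operatorname{Hom}(E_i,E_{i_j})\to\operatorname{Hom}(E_i,X)$ surjective for $i\ll0$; it is ample if moreover $\mathcal{C}_0=0$. *)

(* Defs.v *)
From HB Require Import structures.
From mathcomp Require Import all_boot all_order all_algebra.
Set Implicit Arguments. Unset Strict Implicit. Unset Printing Implicit Defensive.
Import Order.TTheory GRing.Theory Num.Theory.
Local Open Scope ring_scope.

Record kcat (k : fieldType) := KCat {
  Ob :> Type;
  Mor : Ob -> Ob -> lmodType k;
  comp : forall X Y Z : Ob, Mor Y Z -> Mor X Y -> Mor X Z;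
  idm : forall X : Ob, Mor X X;
  compA : forall (X Y Z W : Ob) (h : Mor Z W) (g : Mor Y Z) (f : Mor X Y),
      comp h (comp g f) = comp (comp h g) f;
  comp1m : forall (X Y : Ob) (f : Mor X Y), comp (idm Y) f = f;
  compm1 : forall (X Y : Ob) (f : Mor X Y), comp f (idm X) = f;
  comp_linl : forall (X Y Z : Ob) (f : Mor X Y) (a : k) (g1 g2 : Mor Y Z),
      comp (a *: g1 + g2) f = a *: comp g1 f + comp g2 f;
  comp_linr : forall (X Y Z : Ob) (g : Mor Y Z) (a : k) (f1 f2 : Mor X Y),
      comp g (a *: f1 + f2) = a *: comp g f1 + comp g f2
}.
Arguments Mor {k C} : rename.
Arguments comp {k C X Y Z} : rename.
Arguments idm {k C} : rename.

Section Cat.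
Variables (k : fieldType) (C : kcat k).

Definition mono (X Y : C) (f : Mor X Y) : Prop :=
  forall (W : C) (g h : Mor W X), comp f g = comp f h -> g = h.

(* epimorphism = "surjection" in an abelian category *)
Definition epi (X Y : C) (f : Mor X Y) : Prop :=
  forall (W : C) (g h : Mor Y W), comp g f = comp h f -> g = h.

Definition is_zero_obj (Z : C) : Prop :=
  (forall (Y : C) (f : Mor Z Y), f = 0) /\ (forall (Y : C) (f : Mor Y Z), f = 0).

Definition is_kernel (X Y K : C) (f : Mor X Y) (ker : Mor K X) : Prop :=
  comp f ker = 0 /\
  forall (W : C) (g : Mor W X), comp f g = 0 -> exists! h : Mor W K, comp ker h = g.

Definition is_cokernel (X Y Q : C) (f : Mor X Y) (cok : Mor Y Q) : Prop :=
  comp cok f = 0 /\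
  forall (W : C) (g : Mor Y W), comp g f = 0 -> exists! h : Mor Q W, comp h cok = g.

Definition is_biproduct (s : nat) (F : 'I_s -> C) (S : C)
    (inj : forall t, Mor (F t) S) (prj : forall t, Mor S (F t)) : Prop :=
  [/\ forall t, comp (prj t) (inj t) = idm (F t),
      forall t u, t != u -> comp (prj t) (inj u) = 0 &
      \sum_(t < s) comp (inj t) (prj t) = idm S].

Definition abelian : Prop :=
  (exists Z : C, is_zero_obj Z) /\
  (forall X Y : C, exists (S : C) (i1 : Mor X S) (i2 : Mor Y S)
                          (p1 : Mor S X) (p2 : Mor S Y),
     [/\ comp p1 i1 = idm X, comp p2 i2 = idm Y, comp p1 i2 = 0,
         comp p2 i1 = 0 & comp i1 p1 + comp i2 p2 = idm S]) /\
  (forall (X Y : C) (f : Mor X Y), exists (K : C) (ker : Mor K X), is_kernel f ker) /\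
  (forall (X Y : C) (f : Mor X Y), exists (Q : C) (cok : Mor Y Q), is_cokernel f cok) /\
  (forall (X Y : C) (f : Mor X Y), mono f ->
     exists (Z : C) (g : Mor Y Z), is_kernel g f) /\
  (forall (X Y : C) (f : Mor X Y), epi f ->
     exists (Z : C) (g : Mor Z X), is_cokernel g f).

Definition findim (V : lmodType k) : Prop :=
  exists (n : nat) (v : 'I_n -> V), forall x : V,
    exists c : 'I_n -> k, x = \sum_(i < n) c i *: v i.

Variable E : int -> C.

Definition projective_seq : Prop :=
  forall (X Y : C) (p : Mor X Y), epi p ->
    exists n : int, forall i : int, i < n ->
      forall g : Mor (E i) Y, exists h : Mor (E i) X, comp p h = g.

Definition in_C0 (X : C) : Prop :=
  exists n : int, forall i : int, i < n -> forall f : Mor (E i) X, f = 0.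

Definition coherent : Prop :=
  projective_seq /\
  forall (X : C) (m : int), exists (s : nat) (ij : 'I_s -> int),
    (forall t, ij t <= m) /\
    exists n : int, forall i : int, i < n ->
      (* the map  (+)_t Mor(E_{i_t},X) (x) Mor(E_i,E_{i_t}) -> Mor(E_i,X)
         is surjective: every y is a finite sum of composites *)
      forall y : Mor (E i) X,
        exists (N : nat) (tt : 'I_N -> 'I_s)
               (f : forall l, Mor (E (ij (tt l))) X)
               (a : forall l, Mor (E i) (E (ij (tt l)))),
          y = \sum_(l < N) comp (f l) (a l).

Definition ample : Prop :=
  coherent /\ forall X : C, in_C0 X -> is_zero_obj X.

(* A(E)_{ij} = Mor(E_i,E_j) for i<j, A_{ii} = k, 0 for i>j.
   (Gamma_{<= m} X)_i = Mor(E_i,X) for i <= m and 0 for i > m; the right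
   action M_j (x) A_{ij} -> M_i is composition (and scalar mult. for i = j).
   [gamma_act_image i j x y] : y lies in the image x . A_{ij} of the element
   x in degree j, i.e. in the image of the degree-i component of the module
   map P_j -> Gamma_{<=m} X sending 1 in A_{jj} to x. *)
Definition gamma_act_image (X : C) (i j : int) (x : Mor (E j) X) (y : Mor (E i) X)
    : Prop :=
  (i < j /\ exists a : Mor (E i) (E j), y = comp x a)
  \/ (exists (e : j = i) (c : k), y = c *: eq_rect j (fun l => Mor (E l) X) x i e)
  \/ y = 0.

(* Gamma_{<= m} X is finitely generated: there is a surjective module map
   (+)_{t} P_{j_t} -> Gamma_{<= m} X; such a map is given by the images
   x_t in degree j_t of the units, and surjectivity in degree i means every
   element of degree i is a sum of elements x_t . a_t with a_t in A_{i j_t}.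
   (Generators of degree > m are zero and can be omitted, hence j_t <= m;
   components of degree i > m are zero, so only i <= m needs checking.) *)
Definition Gamma_fg (X : C) (m : int) : Prop :=
  exists (s : nat) (j : 'I_s -> int) (x : forall t, Mor (E (j t)) X),
    (forall t, j t <= m) /\
    forall i : int, i <= m -> forall y : Mor (E i) X,
      exists f : 'I_s -> Mor (E i) X,
        (forall t, gamma_act_image (x t) (f t)) /\ y = \sum_(t < s) f t.

Definition surj_from_sum (X : C) (m : int) : Prop :=
  exists (s : nat) (ij : 'I_s -> int), (forall t, ij t <= m) /\
    exists (S : C) (inj : forall t, Mor (E (ij t)) S) (prj : forall t, Mor S (E (ij t))),
      @is_biproduct s (fun t => E (ij t)) S inj prj /\
      exists g : Mor S X, epi g.

End Cat.

(* Main.v *)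
From mathcomp Require Import all_boot all_order all_algebra zify.
Require Import Defs.
Set Implicit Arguments. Unset Strict Implicit. Unset Printing Implicit Defensive.
Import Order.TTheory GRing.Theory Num.Theory.
Local Open Scope ring_scope.

Section Basics.
Variables (k : fieldType) (C : kcat k).

Lemma compm0 (X Y Z : C) (g : Mor Y Z) : comp g (0 : Mor X Y) = 0.
Proof.
have := @comp_linr _ _ X _ _ g (-1) 0 0.
by rewrite scaler0 addr0 scaleN1r addNr.
Qed.

Lemma comp0m (X Y Z : C) (f : Mor X Y) : comp (0 : Mor Y Z) f = 0.
Proof.
have := @comp_linl _ _ _ _ Z f (-1) 0 0.
by rewrite scaler0 addr0 scaleN1r addNr.
Qed.

Lemma compDr (X Y Z : C) (g : Mor Y Z) (f1 f2 : Mor X Y) :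
  comp g (f1 + f2) = comp g f1 + comp g f2.
Proof. by have := comp_linr g 1 f1 f2; rewrite !scale1r. Qed.

Lemma compDl (X Y Z : C) (g1 g2 : Mor Y Z) (f : Mor X Y) :
  comp (g1 + g2) f = comp g1 f + comp g2 f.
Proof. by have := comp_linl f 1 g1 g2; rewrite !scale1r. Qed.

Lemma compZr (X Y Z : C) (g : Mor Y Z) a (f : Mor X Y) :
  comp g (a *: f) = a *: comp g f.
Proof. by have := comp_linr g a f 0; rewrite !addr0 compm0 addr0. Qed.

Lemma compZl (X Y Z : C) (g : Mor Y Z) a (f : Mor X Y) :
  comp (a *: g) f = a *: comp g f.
Proof. by have := comp_linl f a g 0; rewrite !addr0 comp0m addr0. Qed.

Lemma compNl (X Y Z : C) (g : Mor Y Z) (f : Mor X Y) :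
  comp (- g) f = - comp g f.
Proof. by rewrite -scaleN1r compZl scaleN1r. Qed.

Lemma compBl (X Y Z : C) (g1 g2 : Mor Y Z) (f : Mor X Y) :
  comp (g1 - g2) f = comp g1 f - comp g2 f.
Proof. by rewrite compDl compNl. Qed.

Lemma comp_sumr (X Y Z : C) (g : Mor Y Z) (I : Type) (r : seq I) (P : pred I)
  (F : I -> Mor X Y) :
  comp g (\sum_(i <- r | P i) F i) = \sum_(i <- r | P i) comp g (F i).
Proof.
by apply: (big_morph (comp g)); [exact: compDr | exact: compm0].
Qed.

Lemma comp_suml (X Y Z : C) (f : Mor X Y) (I : Type) (r : seq I) (P : pred I)
  (F : I -> Mor Y Z) :
  comp (\sum_(i <- r | P i) F i) f = \sum_(i <- r | P i) comp (F i) f.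
Proof.
by apply: (big_morph (fun g => comp g f)) => [g1 g2|]; [exact: compDl | exact: comp0m].
Qed.

End Basics.

Section Gen.
Variables (k : fieldType) (C : kcat k) (E : int -> C) (X : C).

Notation gai := (@gamma_act_image k C E X).

Lemma gai0 (j i : int) (x : Mor (E j) X) : gai x (0 : Mor (E i) X).
Proof. by right; right. Qed.

Lemma gaiD (j i : int) (x : Mor (E j) X) (y1 y2 : Mor (E i) X) :
  gai x y1 -> gai x y2 -> gai x (y1 + y2).
Proof.
case=> [[lt1 [a1 ->]] | [[e1 [c1 ->]] | ->]];
case=> [[lt2 [a2 ->]] | [[e2 [c2 ->]] | ->]]; rewrite ?addr0 ?add0r.
- by left; split=> //; exists (a1 + a2); rewrite compDr.
- by exfalso; move: lt1; rewrite e2 ltxx.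
- by left; split=> //; exists a1.
- by exfalso; move: lt2; rewrite e1 ltxx.
- by right; left; exists e1, (c1 + c2); rewrite (eq_irrelevance e2 e1) scalerDl.
- by right; left; exists e1, c1.
- by left; split=> //; exists a2.
- by right; left; exists e2, c2.
- by right; right.
Qed.

Definition gen_in (T : finType) (j : T -> int) (x : forall t, Mor (E (j t)) X)
  (i : int) (y : Mor (E i) X) : Prop :=
  exists f : T -> Mor (E i) X, (forall t, gai (x t) (f t)) /\ y = \sum_t f t.

Variables (T : finType) (j : T -> int) (x : forall t, Mor (E (j t)) X).

Lemma gen_in0 i : gen_in x (0 : Mor (E i) X).
Proof. by exists (fun _ => 0); split=> [t|]; [exact: gai0 | rewrite big1]. Qed.

Lemma gen_inD i (y1 y2 : Mor (E i) X) : gen_in x y1 -> gen_in x y2 -> gen_in x (y1 + y2).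
Proof.
move=> [f1 [H1 ->]] [f2 [H2 ->]]; exists (fun t => f1 t + f2 t); split.
  by move=> t; apply: gaiD.
by rewrite big_split.
Qed.

Lemma gen_in_sum i (I : Type) (r : seq I) (P : pred I) (F : I -> Mor (E i) X) :
  (forall l, P l -> gen_in x (F l)) -> gen_in x (\sum_(l <- r | P l) F l).
Proof.
move=> H; apply: (big_ind (@gen_in T j x i)); [exact: gen_in0 | exact: gen_inD | exact: H].
Qed.

Lemma gen_in1 i (g : T) (y : Mor (E i) X) : gai (x g) y -> gen_in x y.
Proof.
move=> Hy; exists (fun t => if t == g then y else 0); split.
  by move=> t; case: eqP => [->|_] //; exact: gai0.
rewrite (bigD1 g) //= eqxx big1 ?addr0 // => t /negbTE ->. by [].
Qed.

Lemma gen_in_Gamma (m : int) : (forall t, j t <= m) ->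
  (forall i, i <= m -> forall y : Mor (E i) X, gen_in x y) -> Gamma_fg E X m.
Proof.
move=> Hj Hy.
exists #|T|, (fun o => j (enum_val o)), (fun o => x (enum_val o)); split.
  by move=> o; exact: Hj.
move=> i Hi y; have [f [Hf ->]] := Hy i Hi y.
exists (fun o => f (enum_val o)); split; first by move=> o; exact: Hf.
by rewrite -(@big_enum_val _ 0 +%R T T f); apply: eq_bigl.
Qed.

End Gen.

From Stdlib Require Import ClassicalEpsilon.

Lemma coh_Gamma (k : fieldType) (C : kcat k) (E : int -> C)
    (Hfin : forall (i : int) (X : C), findim (Mor (E i) X)) :
  coherent E -> forall (X : C) (m : int), Gamma_fg E X m.
Proof.
move=> [_ Hc] X m; have [s [ij [Hij [n Hn]]]] := Hc X m.
have HV : forall a : int, {nv : {N : nat & 'I_N -> Mor (E a) X} |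
   forall z, exists c : 'I_(tag nv) -> k, z = \sum_(l < tag nv) c l *: tagged nv l}.
  move=> a; apply: constructive_indefinite_description.
  by have [N [v Hv]] := Hfin a X; exists (existT _ N v).
pose NB a := tag (sval (HV a)).
pose VB a : 'I_(NB a) -> Mor (E a) X := tagged (sval (HV a)).
have VBP : forall a z, exists c : 'I_(NB a) -> k, z = \sum_(l < NB a) c l *: VB a l.
  by move=> a z; exact: (svalP (HV a) z).
pose B := \sum_(t < s) (m - ij t).
have hB : 0 <= B by apply: sumr_ge0 => t _; rewrite subr_ge0.
have hBt : forall t, m - ij t <= B.
  by move=> t; rewrite /B (bigD1 t) //= lerDl; apply: sumr_ge0 => u _; rewrite subr_ge0.
pose n' := Num.min n (m - B).
have hn1 : n' <= m - B by rewrite /n' ge_min lexx orbT.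
have hn2 : n' <= n by rewrite /n' ge_min lexx.
pose D := absz (m + 1 - n')%R.
pose deg (u : 'I_(s + D)) : int :=
  match split u with inl t => ij t | inr d => n' + (nat_of_ord d)%:Z end.
have deg_le : forall u, deg u <= m.
  move=> u; rewrite /deg; case: (split u) => [t|d]; first exact: Hij.
  have := ltn_ord d; rewrite /D => hd; have := hBt; lia.
pose T := {u : 'I_(s + D) & 'I_(NB (deg u))}.
pose jj (w : T) := deg (tag w).
pose xx (w : T) : Mor (E (jj w)) X := VB (deg (tag w)) (tagged w).
have LA : forall a (z : Mor (E a) X) i (b : Mor (E i) (E a)),
    (exists u, deg u = a) -> i < a -> gen_in xx (comp z b).
  move=> a z i b [u e]; move: z b; case: a / e => z b lt.
  have [c ->] := VBP (deg u) z.
  rewrite comp_suml; apply: gen_in_sum => l _.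
  rewrite compZl -compZr; apply: (@gen_in1 _ _ _ _ _ _ xx _ (existT _ u l)).
  by left; split=> //; exists (c l *: b).
have LB : forall a (y : Mor (E a) X), (exists u, deg u = a) -> gen_in xx y.
  move=> a y [u e]; move: y; case: a / e => y.
  have [c ->] := VBP (deg u) y.
  apply: gen_in_sum => l _; apply: (@gen_in1 _ _ _ _ _ _ xx _ (existT _ u l)).
  by right; left; exists erefl, (c l).
apply: (@gen_in_Gamma _ _ _ _ _ jj xx) => [w|i Hi y]; first exact: deg_le.
case: (ltP i n') => [lt | ge].
  have [N [tt [f [a ->]]]] := Hn i (lt_le_trans lt hn2) y.
  apply: gen_in_sum => l _; apply: LA.
    exists (lshift D (tt l)); rewrite /deg.
    by have -> : split (lshift D (tt l)) = inl (tt l) := unsplitK (inl _).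
  have := hBt (tt l); lia.
have hd : (absz (i - n')%R < D)%N by rewrite /D; lia.
apply: LB; exists (rshift s (Ordinal hd)); rewrite /deg.
have -> : split (rshift s (Ordinal hd)) = inr (Ordinal hd) := unsplitK (inr _).
rewrite /=; lia.
Qed.

Lemma Gamma_coh (k : fieldType) (C : kcat k) (E : int -> C) :
  projective_seq E -> (forall (X : C) (m : int), Gamma_fg E X m) -> coherent E.
Proof.
move=> HE H; split=> // X m.
have [s [j [x [Hj Hy]]]] := H X m.
exists s, j; split=> //.
pose B := \sum_(t < s) (m - j t).
have hB : 0 <= B by apply: sumr_ge0 => t _; rewrite subr_ge0.
have hBt : forall t, m - j t <= B.
  by move=> t; rewrite /B (bigD1 t) //= lerDl; apply: sumr_ge0 => u _; rewrite subr_ge0.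
exists (m - B) => i lt y.
have him : i <= m by lia.
have [f [Hf ->]] := Hy i him y.
have Ha : forall t, {a : Mor (E i) (E (j t)) | f t = comp (x t) a}.
  move=> t; apply: constructive_indefinite_description.
  have ltj : i < j t by have := hBt t; lia.
  case: (Hf t) => [[_ [a ->]] | [[e _] | ->]]; first by exists a.
    by exfalso; move: ltj; rewrite e ltxx.
  by exists 0; rewrite compm0.
exists s, (fun l => l), x, (fun t => sval (Ha t)).
by apply: eq_bigr => t _; exact: (svalP (Ha t)).
Qed.

Definition ocase (s : nat) (P : 'I_s.+1 -> Type) (x0 : P ord0)
  (xs : forall t, P (lift ord0 t)) (t : 'I_s.+1) : P t :=
  match unliftP ord0 t with
  | UnliftSome u e => eq_rect_r P (xs u) e
  | UnliftNone e => eq_rect_r P x0 e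
  end.

Lemma ocase0 (s : nat) (P : 'I_s.+1 -> Type) x0 xs : @ocase s P x0 xs ord0 = x0.
Proof.
rewrite /ocase; case: (unliftP ord0 ord0) => [u e|e].
  by exfalso; move/eqP: e; rewrite (negbTE (neq_lift _ _)).
by rewrite (eq_irrelevance e erefl).
Qed.

Lemma ocaseS (s : nat) (P : 'I_s.+1 -> Type) x0 xs u :
  @ocase s P x0 xs (lift ord0 u) = xs u.
Proof.
rewrite /ocase; case: (unliftP ord0 (lift ord0 u)) => [u' e|e].
  have eu : u' = u := lift_inj (esym e).
  by subst u'; rewrite (eq_irrelevance e erefl).
by exfalso; move/eqP: e; rewrite eq_sym (negbTE (neq_lift _ _)).
Qed.

Lemma bip_exists (k : fieldType) (C : kcat k) (HC : abelian C) (s : nat) (F : 'I_s -> C) :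
  exists S inj prj, @is_biproduct k C s F S inj prj.
Proof.
have [[Z [HZ1 HZ2]] [Hbin _]] := HC.
elim: s F => [|s IH] F.
  exists Z, (fun t => 0), (fun t => 0); split; first by case.
    by case.
  by rewrite big_ord0 (HZ1 Z (idm Z)).
have [S' [inj' [prj' [H1 H2 H3]]]] := IH (fun t => F (lift ord0 t)).
have [S [i1 [i2 [p1 [p2 [e1 e2 e3 e4 e5]]]]]] := Hbin (F ord0) S'.
pose inj := @ocase s (fun t => Mor (F t) S) i1 (fun t => comp i2 (inj' t)).
pose prj := @ocase s (fun t => Mor S (F t)) p1 (fun t => comp (prj' t) p2).
exists S, inj, prj; split.
- move=> t; case: (unliftP ord0 t) => [u ->|->]; rewrite /inj /prj ?ocaseS ?ocase0 //.
  by rewrite -compA (compA p2 i2) e2 comp1m H1.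
- move=> t u; case: (unliftP ord0 t) => [t' ->|->]; case: (unliftP ord0 u) => [u' ->|->];
    rewrite /inj /prj ?ocaseS ?ocase0 ?eqxx // => ne.
  + by rewrite -compA (compA p2 i2) e2 comp1m H2.
  + by rewrite -compA e4 compm0.
  + by rewrite compA e3 comp0m.
- rewrite big_ord_recl /inj /prj ocase0.
  under eq_bigr => u _ do rewrite !ocaseS -compA (compA (inj' u)).
  by rewrite -comp_sumr -comp_suml H3 comp1m ocase0 e5.
Qed.

Lemma cast_comp (k : fieldType) (C : kcat k) (E : int -> C) (X Q : C) (cok : Mor X Q)
  (a i : int) (z : Mor (E a) X) (e : a = i) (c : k) :
  comp cok z = 0 -> comp cok (c *: eq_rect a (fun l => Mor (E l) X) z i e) = 0.
Proof. by case: i / e => H; rewrite compZr H scaler0. Qed.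

Lemma ample_surj (k : fieldType) (C : kcat k) (HC : abelian C)
    (E : int -> C) (HE : projective_seq E)
    (Hfin : forall (i : int) (X : C), findim (Mor (E i) X)) :
  ample E -> forall (X : C) (m : int), surj_from_sum E X m.
Proof.
move=> [Hcoh HC0] X m.
have [s [j [x [Hj Hy]]]] := coh_Gamma Hfin Hcoh X m.
have [S [inj [prj [B1 B2 B3]]]] := bip_exists HC (fun t => E (j t)).
pose g : Mor S X := \sum_t comp (x t) (prj t).
exists s, j; split=> //; exists S, inj, prj; split; first by split.
exists g.
have [_ [_ [_ [Hcok _]]]] := HC.
have [Q [cok [Hcok1 Hcok2]]] := Hcok _ _ g.
have gi : forall t, comp g (inj t) = x t.
  move=> t; rewrite comp_suml (bigD1 t) //= -compA B1 compm1 big1 ?addr0 //.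
  by move=> u ne; rewrite -compA B2 ?compm0.
have cx : forall t, comp cok (x t) = 0 by move=> t; rewrite -gi compA Hcok1 comp0m.
have cy : forall i, i <= m -> forall y : Mor (E i) X, comp cok y = 0.
  move=> i Hi y; have [f [Hf ->]] := Hy i Hi y.
  rewrite comp_sumr big1 // => t _.
  case: (Hf t) => [[_ [a ->]] | [[e [c ->]] | ->]].
  - by rewrite compA cx comp0m.
  - exact: cast_comp.
  - exact: compm0.
have cok_epi : epi cok.
  move=> W h1 h2 H.
  have H0 : comp (comp h1 cok) g = 0 by rewrite -compA Hcok1 compm0.
  have [h [_ Hu]] := Hcok2 W _ H0.
  by rewrite -(Hu h1 erefl) -(Hu h2 (esym H)).
have [n1 Hn1] := HE _ _ cok cok_epi.
have HQ : in_C0 E Q.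
  exists (Num.min n1 (m + 1)) => i lt phi.
  have h1 : i < n1 by move: lt; rewrite lt_min => /andP[].
  have h2 : i <= m by move: lt; rewrite lt_min => /andP[_]; lia.
  have [psi <-] := Hn1 i h1 phi.
  exact: cy.
have [HZ1 _] := HC0 Q HQ.
move=> W h1 h2 H.
have H0 : comp (h1 - h2) g = 0 by rewrite compBl H subrr.
have [u [Hu _]] := Hcok2 W _ H0.
by apply/eqP; rewrite -subr_eq0 -Hu (HZ1 _ u) comp0m.
Qed.

Lemma surj_ample (k : fieldType) (C : kcat k)
    (E : int -> C) (HE : projective_seq E) :
  (forall (X : C) (m : int), surj_from_sum E X m) -> ample E.
Proof.
move=> H; split.
  split=> // X m.
  have [s [ij [Hij [S [inj [prj [[B1 B2 B3] [g Hg]]]]]]]] := H X m.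
  exists s, ij; split=> //.
  have [n Hn] := HE _ _ g Hg.
  exists n => i lt y; have [h <-] := Hn i lt y.
  exists s, (fun l => l), (fun t => comp g (inj t)), (fun t => comp (prj t) h).
  rewrite -{1}(comp1m h) -B3 comp_suml comp_sumr; apply: eq_bigr => t _.
  by rewrite !compA.
move=> X [n Hn].
have [s [ij [Hij [S [inj [prj [[B1 B2 B3] [g Hg]]]]]]]] := H X (n - 1).
have g0 : g = 0.
  rewrite -(compm1 g) -B3 comp_sumr big1 // => t _.
  rewrite compA (Hn _ _ (comp g (inj t))) ?comp0m //.
  by have := Hij t; lia.
have hid : idm X = 0.
  by apply: Hg; rewrite comp1m comp0m g0.
split=> Y f; first by rewrite -(compm1 f) hid compm0.
by rewrite -(comp1m f) hid comp0m.
Qed.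

Theorem lemma2p4 (k : fieldType) (C : kcat k) (HC : abelian C)
    (E : int -> C) (HE : projective_seq E)
    (Hfin : forall (i : int) (X : C), findim (Mor (E i) X)) :
  (coherent E <-> forall (X : C) (m : int), Gamma_fg E X m) /\
  (ample E <-> forall (X : C) (m : int), surj_from_sum E X m).
Proof.
split; split.
- exact: coh_Gamma.
- exact: Gamma_coh.
- exact: ample_surj.
- exact: surj_ample.
Qed.
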